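(* For every integer $k\ge 2$ and every positive integer $n$, \[ t_{2k+1}(n)\le 9(k-1)\,\mathrm{ex}\!\left(\left\lceil \tfrac{n}{3}\right\rceil,\left\lceil \tfrac{n}{3}\right\rceil, C_{2k}\right). \]
   Context: All graphs are simple. For a graph $G$, $t(G)$ denotes the number of triangles ($K_3$ subgraphs) of $G$. A graph is $F$-free if it contains no (not necessarily induced) subgraph isomorphic to $F$. For $\ell\ge 3$, $t_\ell(n)$ is the maximum of $t(G)$ over all $C_\ell$-free graphs $G$ on $n$ vertices, where $C_\ell$ is the cycle of length $\ell$. $\mathrm{ex}(m,n,F)$ denotes the maximum number of edges in a bipartite graph with parts of sizes $m$ and $n$ that contains no subgraph isomorphic to $F$. *)

(* Defs.v *)
From mathcomp Require Import all_boot.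
Set Implicit Arguments. Unset Strict Implicit. Unset Printing Implicit Defensive.

Definition adj (T : finType) (E : {set T * T}) (x y : T) : bool := (x, y) \in E.

Definition simple_graph (T : finType) (E : {set T * T}) : bool :=
  [forall x, forall y, (adj E x y == adj E y x)] && [forall x, ~~ adj E x x].

(* G contains C_l (not necessarily induced): an injective map of the cycle
   vertices 0..l-1 into T, consecutive vertices (mod l) adjacent. *)
Definition has_cycle (T : finType) (l : nat) (E : {set T * T}) : bool :=
  [exists f : {ffun 'I_l -> T},
     injectiveb f &&
     [forall i : 'I_l, forall j : 'I_l,
        (val j == (val i).+1 %% l) ==> adj E (f i) (f j)]].

Definition cycle_free (T : finType) (l : nat) (E : {set T * T}) : bool :=
  ~~ has_cycle l E.

Definition triangles (T : finType) (E : {set T * T}) : nat :=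
  #|[set S : {set T} | (#|S| == 3) &&
       [forall x in S, forall y in S, (x != y) ==> adj E x y]]|.

Definition t_max (l n : nat) : nat :=
  \max_(E : {set 'I_n * 'I_n} | simple_graph E && cycle_free l E) triangles E.

Definition bip_graph (m n : nat) (B : {set 'I_m * 'I_n}) : {set ('I_m + 'I_n) * ('I_m + 'I_n)} :=
  [set p : ('I_m + 'I_n) * ('I_m + 'I_n) |
     match p with
     | (inl a, inr b) => (a, b) \in B
     | (inr b, inl a) => (a, b) \in B
     | _ => false
     end].

Definition ex_bip_cycle (m n l : nat) : nat :=
  \max_(B : {set 'I_m * 'I_n} | cycle_free l (bip_graph B)) #|B|.

(* Main.v *)
Require Import Defs.
From mathcomp Require Import all_boot all_fingroup zify ring.
Set Implicit Arguments. Unset Strict Implicit. Unset Printing Implicit Defensive.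


Lemma card_sumP (T : finType) (P : pred T) : #|[set x | P x]| = \sum_x P x.
Proof. by rewrite -sum1dep_card big_mkcond; apply: eq_bigr => x _; case: (P x). Qed.

Lemma sum_in (T : finType) (S : {set T}) (f : T -> bool) :
  \sum_(x in S) f x = \sum_x ((x \in S) && f x).
Proof. by rewrite big_mkcond; apply: eq_bigr => x _; case: (x \in S). Qed.

Lemma size_le_card (T : finType) (S : {set T}) (s : seq T) :
  uniq s -> all (mem S) s -> size s <= #|S|.
Proof.
move=> hu ha; rewrite -(card_uniqP hu); apply: subset_leq_card.
by apply/subsetP => y hy; move/allP: ha => /(_ y hy).
Qed.

Lemma path_parity (T : eqType) (e : rel T) (pr : pred T)
  (ebip : forall x y, e x y -> pr x != pr y) x s i :
  path e x s -> i <= size s -> pr (nth x (x :: s) i) = pr x (+) odd i.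
Proof.
elim: s x i => [|y s IH] x [|i] //=; first by rewrite addbF.
- by rewrite addbF.
move=> /andP [hxy hp] hi.
rewrite (set_nth_default y) //.
rewrite IH //.
have := ebip _ _ hxy; case: (pr x); case: (pr y) => //= _; by case: (odd i).
Qed.

Lemma maxpath (T : finType) (e : rel T) (esym : symmetric e) (S : {set T}) x s :
  x \in S -> all (mem S) s -> uniq (x :: s) -> path e x s ->
  exists x' s', [/\ x' \in S, all (mem S) s', uniq (x' :: s'), path e x' s' &
     forall u, u \in S -> e x' u -> u \in x' :: s'].
Proof.
have [N] := ubnP (#|S| - size s); elim: N x s => // N IH x s hN hx hs hu hp.
case: (boolP [exists u, (u \in S) && e x u && (u \notin x :: s)]).
- move/existsP => [u /andP [/andP [huS hxu] hun]].
  have hsz : size (u :: x :: s) <= #|S|.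
    apply: size_le_card; first by rewrite cons_uniq hun hu.
    by rewrite /= huS hx hs.
  apply: (IH u (x :: s)) => //.
  + move: hsz hN => /=; lia.
  + by rewrite /= hx hs.
  + by rewrite cons_uniq hun hu.
  + by rewrite /= esym hxu hp.
- move=> hne; exists x, s; split => // u hu' hxu.
  apply/negPn/negP => hn; move/negP: hne; apply; apply/existsP; exists u.
  by rewrite hu' hxu hn.
Qed.

Lemma long_path (T : finType) (e : rel T) (esym : symmetric e) (pr : pred T)
  (ebip : forall x y, e x y -> pr x != pr y) (S : {set T}) k x0 :
  x0 \in S -> (forall v, v \in S -> k <= \sum_(u in S) e v u) ->
  exists x s, [/\ x \in S, all (mem S) s, uniq (x :: s), path e x s & 2 * k <= (size s).+1].
Proof.
move=> hx0 hdeg.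
have [x [s [hx hs hu hp hnb]]] := maxpath esym (s := [::]) hx0 isT isT isT.
exists x, s; split => //.
pose Nb := [set u in S | e x u].
have hk : k <= #|Nb|.
  by apply: leq_trans (hdeg x hx) _; rewrite sum_in -card_sumP.
pose l := map (fun u => (index u (x :: s))./2) (enum Nb).
have hodd : forall u, u \in Nb -> odd (index u (x :: s)) /\ index u (x :: s) <= size s.
  move=> u; rewrite inE => /andP [huS hxu].
  have hin := hnb u huS hxu.
  have hi : index u (x :: s) <= size s by rewrite -ltnS; rewrite index_mem.
  split => //.
  have := path_parity ebip hp hi; rewrite nth_index //.
  have := ebip _ _ hxu; case: (pr x); case: (pr u) => //= _; by case: odd.
have hl : uniq l.
  rewrite map_inj_in_uniq ?enum_uniq // => u v; rewrite !mem_enum => hu' hv' heq.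
  have [ou _] := hodd u hu'; have [ov _] := hodd v hv'.
  have hiu := odd_double_half (index u (x :: s)).
  have hiv := odd_double_half (index v (x :: s)).
  rewrite ou heq in hiu; rewrite ov in hiv.
  have hie : index u (x :: s) = index v (x :: s) by rewrite -hiu; exact: hiv.
  move: hu' hv'; rewrite !inE => /andP [hu1 hu2] /andP [hv1 hv2].
  by rewrite -(nth_index x (hnb u hu1 hu2)) -(nth_index x (hnb v hv1 hv2)) hie.
have hsub : {subset l <= iota 0 ((size s).+1./2)}.
  move=> j /mapP [u]; rewrite mem_enum => hu' ->.
  have [ou hle] := hodd u hu'.
  have hiu := odd_double_half (index u (x :: s)); rewrite ou in hiu.
  have h2 : (index u (x :: s)).+1 = ((index u (x :: s))./2).+1.*2.
    by move: hiu; rewrite -!muln2; lia.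
  rewrite mem_iota add0n /=.
  have := @half_leq (index u (x::s)).+1 (size s).+1 hle; by rewrite h2 doubleK.
have := uniq_leq_size hl hsub; rewrite size_iota size_map -cardE => h.
have : 2 * k <= 2 * ((size s).+1./2) by rewrite leq_mul2l; apply: leq_trans h.
move=> h2; apply: (leq_trans h2); rewrite mul2n -[X in _ <= X]odd_double_half.
by apply: leq_addl.
Qed.


Lemma edge_bound (T : finType) (e : rel T) (esym : symmetric e) (pr : pred T)
  (ebip : forall x y, e x y -> pr x != pr y) k (S : {set T}) :
  (forall x s, x \in S -> all (mem S) s -> uniq (x::s) -> path e x s -> (size s).+1 < 2 * k) ->
  \sum_(x in S) \sum_(y in S) (e x y && pr x) <= k.-1 * #|S|.
Proof.
have [N] := ubnP #|S|; elim: N S => // N IH S hN hnp.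
case: (boolP [exists v in S, \sum_(u in S) e v u < k]).
- move/existsP => [v /andP [hv hdeg]].
  pose S' := S :\ v.
  have hcard : #|S| = #|S'|.+1 by rewrite (cardsD1 v S) hv.
  have hS' : forall y, (y \in S) && (y != v) = (y \in S').
    by move=> y; rewrite in_setD1 andbC.
  have IH' := IH S' ltac:(by move: hN; rewrite hcard)
     ltac:(move=> x s hx hs; apply: hnp;
       [by move: hx; rewrite in_setD1 => /andP [] | apply/allP => y /(allP hs); rewrite /= in_setD1 => /andP []]).
  rewrite (bigD1 v hv) /= (eq_bigl (fun x => x \in S') _ hS').
  have hrow : forall x, \sum_(y in S) (e x y && pr x) = (e x v && pr x) + \sum_(y in S') (e x y && pr x).
    by move=> x; rewrite (bigD1 v hv) /= (eq_bigl (fun y => y \in S') _ hS').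
  rewrite (eq_bigr _ (fun x _ => hrow x)).
  rewrite big_split /= addnA.
  have hloc : \sum_(y in S) (e v y && pr v) + \sum_(x in S') (e x v && pr x) <= k.-1.
    have h1 : \sum_(y in S) (e v y && pr v) + \sum_(x in S') (e x v && pr x)
               <= \sum_(y in S) e v y.
      apply: (@leq_trans (\sum_(y in S) (e v y && pr v) + \sum_(x in S) (e x v && pr x))).
        rewrite leq_add2l (bigD1 v hv) /= (eq_bigl (fun y => y \in S') _ hS').
        exact: leq_addl.
      rewrite -big_split /=; apply: leq_sum => y _.
      rewrite (esym y v); case: (boolP (e v y)) => //= hvy.
      by have := ebip _ _ hvy; case: (pr v); case: (pr y).
    by apply: leq_trans h1 _; rewrite -ltnS prednK //; move: hdeg; case: (k) => //.
  rewrite hcard mulnS; apply: leq_add => //; exact: IH'.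
- move=> hall.
  case: (set_0Vmem S) => [-> | [x0 hx0]]; first by rewrite big_set0.
  have hdeg : forall v, v \in S -> k <= \sum_(u in S) e v u.
    move=> v hv; rewrite leqNgt; apply/negP => hlt; move/negP: hall; apply.
    by apply/existsP; exists v; rewrite hv hlt.
  have [x [s [hx hs hu hp hk]]] := long_path esym ebip hx0 hdeg.
  have := hnp x s hx hs hu hp; rewrite ltnNge hk //.
Qed.


Lemma succ_mod i l : i < l -> i.+1 %% l = if i.+1 < l then i.+1 else 0.
Proof.
move=> h; case: ltnP => h2; first by rewrite modn_small.
have -> : i.+1 = l by lia.
by rewrite modnn.
Qed.

Lemma cycle_of_fun (T : finType) (E : {set T * T}) l (h : nat -> T) :
  (forall i j, i < l -> j < l -> h i = h j -> i = j) ->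
  (forall i, i < l -> adj E (h i) (h (i.+1 %% l))) -> has_cycle l E.
Proof.
move=> hinj hadj; apply/existsP; exists [ffun i : 'I_l => h i]; apply/andP; split.
  apply/injectiveP => i j; rewrite !ffunE => /(hinj _ _ (ltn_ord i) (ltn_ord j)).
  exact: val_inj.
apply/forallP => i; apply/forallP => j; apply/implyP => /eqP hj.
by rewrite !ffunE hj; apply: hadj.
Qed.

Lemma fun_of_cycle (T : finType) (E : {set T * T}) l : 0 < l -> has_cycle l E ->
  exists h : nat -> T, (forall i j, i < l -> j < l -> h i = h j -> i = j) /\
    (forall i, i < l -> adj E (h i) (h (i.+1 %% l))).
Proof.
case: l => // l _; move/existsP => [f /andP [/injectiveP hinj /forallP hall]].
exists (fun i => f (inord i)); split.
  move=> i j hi hj /hinj /(congr1 (@nat_of_ord _)); rewrite !inordK //.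
move=> i hi; have := hall (inord i) => /forallP /(_ (inord (i.+1 %% l.+1))).
rewrite /= !inordK ?eqxx //; exact: ltn_pmod.
Qed.

Lemma adj_sym (T : finType) (E : {set T * T}) x y : simple_graph E -> adj E x y = adj E y x.
Proof. by move=> /andP [/forallP /(_ x) /forallP /(_ y) /eqP]. Qed.

Lemma adj_irr (T : finType) (E : {set T * T}) x : simple_graph E -> adj E x x = false.
Proof. by move=> /andP [_ /forallP /(_ x) /negPf]. Qed.


Definition Pset (T : finType) (E : {set T*T}) (c : T -> 'I_3) (a b w : 'I_3) : {set T * T} :=
  [set p : T * T | [&& c p.1 == a, c p.2 == b, adj E p.1 p.2 &
      [exists z, [&& c z == w, adj E p.1 z & adj E p.2 z]]]].

Definition Bset (T : finType) (E : {set T*T}) (c : T -> 'I_3) M (idx : T -> 'I_M) (a b w : 'I_3)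
  : {set 'I_M * 'I_M} := [set (idx p.1, idx p.2) | p in Pset E c a b w].

Lemma bip_free (T : finType) (E : {set T*T}) (c : T -> 'I_3) M (idx : T -> 'I_M) k (a b w : 'I_3)
  (hs : simple_graph E) (hf : cycle_free (2*k+1) E) (hk : 0 < k)
  (hab : a != b) (haw : a != w) (hbw : b != w)
  (hci : forall x y, c x = c y -> idx x = idx y -> x = y) :
  cycle_free (2*k) (bip_graph (Bset E c idx a b w)).
Proof.
apply/negP => hc.
have hk2 : 0 < 2 * k by lia.
have [h [hinj hadj]] := fun_of_cycle hk2 hc.
pose key (u : 'I_M + 'I_M) : 'I_3 * 'I_M := match u with inl i => (a,i) | inr j => (b,j) end.
have hkey : injective key.
  case=> [i|i] [j|j] //= [] => [->|e _|e _|->] //.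
  - by move: hab; rewrite e eqxx.
  - by move: hab; rewrite e eqxx.
have hedge : forall u v, adj (bip_graph (Bset E c idx a b w)) u v ->
   exists x y, [/\ (c x, idx x) = key u, (c y, idx y) = key v, adj E x y &
     exists z, [/\ c z = w, adj E x z & adj E y z]].
  move=> u v; rewrite -[adj (bip_graph _) u v]/((u, v) \in bip_graph _) /bip_graph inE.
  case: u => [i|i]; case: v => [j|j] //=.
  - move/imsetP => [p hp [-> ->]]; move: hp; rewrite inE.
    move=> /and4P [/eqP h1 /eqP h2 h12 /existsP [z /and3P [/eqP hz h1z h2z]]].
    by exists p.1, p.2; rewrite h1 h2; split => //; exists z.
  - move/imsetP => [p hp [-> ->]]; move: hp; rewrite inE.
    move=> /and4P [/eqP h1 /eqP h2 h12 /existsP [z /and3P [/eqP hz h1z h2z]]].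
    by exists p.2, p.1; rewrite h1 h2 adj_sym //; split => //; exists z.
have [x0 _] : exists x0 : T, True.
  have [x _] := hedge _ _ (hadj 0 hk2); by exists x.
pose phi u := odflt x0 [pick x | (c x, idx x) == key u].
have hphi : forall u x, (c x, idx x) = key u -> phi u = x.
  move=> u x hx; rewrite /phi; case: pickP => [y /eqP hy | hn] /=.
  - rewrite -hx in hy; case: hy => h1 h2; exact: hci.
  - by move: (hn x); rewrite hx eqxx.
have hgood : forall i, i < 2 * k -> (c (phi (h i)), idx (phi (h i))) = key (h i) /\
     adj E (phi (h i)) (phi (h (i.+1 %% (2 * k)))).
  move=> i hi; have [x [y [hx hy hxy _]]] := hedge _ _ (hadj i hi).
  by rewrite (hphi _ _ hx) (hphi _ _ hy).
have hcol : forall i, i < 2 * k -> c (phi (h i)) != w.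
  move=> i hi; have [hk1 _] := hgood i hi; move: hk1.
  by case: (h i) => j /= [-> _].
have hinjp : forall i j, i < 2 * k -> j < 2 * k -> phi (h i) = phi (h j) -> i = j.
  move=> i j hi hj he; apply: hinj => //; apply: hkey.
  by rewrite -(hgood i hi).1 -(hgood j hj).1 he.
have [x [y [hx hy hxy [z [hz hxz hyz]]]]] := hedge _ _ (hadj 0 hk2).
have hp0 : phi (h 0) = x by apply: hphi.
have hp1 : phi (h (1 %% (2 * k))) = y by apply: hphi.
move/negP: hf; apply.
pose g i := if i < 2 * k then phi (h (i.+1 %% (2 * k))) else z.
apply: (@cycle_of_fun _ _ _ g).
- move=> i j hi hj; rewrite /g; case: ltnP => hi'; case: ltnP => hj' //.
  + move/(hinjp _ _ (ltn_pmod _ hk2) (ltn_pmod _ hk2)).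
    rewrite (succ_mod hi') (succ_mod hj').
    case: ifP => h1; case: ifP => h2; lia.
  + move=> he; have := hcol _ (ltn_pmod i.+1 hk2); by rewrite he hz eqxx.
  + move=> he; have := hcol _ (ltn_pmod j.+1 hk2); by rewrite -he hz eqxx.
  + lia.
- move=> i hi; rewrite /g (succ_mod hi).
  have : i.+1 < 2 * k \/ i.+1 = 2 * k \/ i = 2 * k by lia.
  case=> [h1 | [h1 | h1]].
  + have h1' : i.+1 < 2 * k + 1 by lia.
    have hi2 : i < 2 * k by lia.
    rewrite h1' hi2 h1 (modn_small h1).
    exact: (hgood _ h1).2.
  + have h1' : i.+1 < 2 * k + 1 by lia.
    have hi2 : i < 2 * k by lia.
    rewrite h1' hi2 h1 modnn ltnn hp0; exact: hxz.
  + have h1' : (i.+1 < 2 * k + 1) = false by lia.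
    rewrite h1' h1 ltnn hk2 hp1 adj_sym //.
Qed.


Definition c0 : 'I_3 := @Ordinal 3 0 isT.
Definition c1 : 'I_3 := @Ordinal 3 1 isT.
Definition c2 : 'I_3 := @Ordinal 3 2 isT.

Lemma I3_cases (o : 'I_3) : [\/ o = c0, o = c1 | o = c2].
Proof.
case: o => [[|[|[|m]]]] h //.
- by apply: Or31; apply: val_inj.
- by apply: Or32; apply: val_inj.
- by apply: Or33; apply: val_inj.
Qed.

Definition tri_set (T : finType) (E : {set T * T}) : {set {set T}} :=
  [set S : {set T} | (#|S| == 3) &&
       [forall x in S, forall y in S, (x != y) ==> adj E x y]].

Lemma trianglesE (T : finType) (E : {set T * T}) : triangles E = #|tri_set E|.
Proof. by []. Qed.

Definition rainbow (T : finType) (c : T -> 'I_3) (S : {set T}) :=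
  [forall x in S, forall y in S, (x != y) ==> (c x != c y)].

Definition Qset (T : finType) (E : {set T * T}) (c : T -> 'I_3) : {set (T * T) * T} :=
  [set t : (T * T) * T | [&& c t.1.1 == c0, c t.1.2 == c1, c t.2 == c2,
      adj E t.1.1 t.1.2, adj E t.1.1 t.2 & adj E t.1.2 t.2]].

Lemma RT_le_Q (T : finType) (E : {set T * T}) (c : T -> 'I_3) :
  #|[set S in tri_set E | rainbow c S]| <= #|Qset E c|.
Proof.
apply: leq_trans (leq_imset_card (fun t : (T * T) * T => [set t.1.1; t.1.2; t.2]) _).
apply: subset_leq_card; apply/subsetP => S; rewrite inE => /andP [hS hrb].
move: hS; rewrite inE => /andP [/eqP h3 hadjS].
have hinj : {in S &, injective c}.
  move=> x y hx hy hxy; apply/eqP; apply: contraT => hne.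
  move/forallP: hrb => /(_ x) /implyP /(_ hx) /forallP /(_ y) /implyP /(_ hy) /implyP /(_ hne).
  by rewrite hxy eqxx.
have hadj : forall x y, x \in S -> y \in S -> x != y -> adj E x y.
  move=> x y hx hy hne.
  by move/forallP: hadjS => /(_ x) /implyP /(_ hx) /forallP /(_ y) /implyP /(_ hy) /implyP /(_ hne).
have hcs : c @: S = [set: 'I_3].
  apply/eqP; rewrite eqEcard subsetT cardsT card_ord card_in_imset // h3 //.
have hex : forall o, exists2 x, x \in S & c x = o.
  move=> o; have : o \in c @: S by rewrite hcs inE.
  by move/imsetP => [x hx ->]; exists x.
have [x hx hcx] := hex c0; have [y hy hcy] := hex c1; have [z hz hcz] := hex c2.
have hxy : x != y by apply/eqP => e; move: hcx; rewrite e hcy.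
have hxz : x != z by apply/eqP => e; move: hcx; rewrite e hcz.
have hyz : y != z by apply/eqP => e; move: hcy; rewrite e hcz.
have -> : S = [set x; y; z].
  apply/eqP; rewrite eq_sym eqEcard; apply/andP; split.
    by apply/subsetP => v; rewrite !inE => /orP [/orP [] | ] /eqP ->.
  have e3 : [set x; y; z] = x |: (y |: [set z]) by apply/setP => v; rewrite !inE orbA.
  by rewrite h3 e3 !cardsU1 cards1 !inE negb_or hxy hxz hyz.
apply/imsetP; exists ((x, y), z) => //.
by rewrite inE /= hcx hcy hcz !eqxx /= !hadj.
Qed.


Definition Sz (T : finType) (E : {set T * T}) (c : T -> 'I_3) (z : T) : {set T} :=
  [set v | [&& c v != c2, adj E v z &
     [exists u, [&& c u != c2, c u != c v, adj E u z & adj E v u]]]].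

Lemma per_z (T : finType) (E : {set T * T}) (c : T -> 'I_3) k z
  (hs : simple_graph E) (hf : cycle_free (2*k+1) E) (hk : 0 < k) :
  \sum_p ((p, z) \in Qset E c) <= (c z == c2) * (k.-1 * #|Sz E c z|).
Proof.
case: (boolP (c z == c2)) => hcz; last first.
  rewrite big1 // => p _; apply/eqP; rewrite eqb0 inE /=.
  by apply: contra hcz => /and5P [_ _ h _ _].
rewrite mul1n.
pose e := fun u v => [&& adj E u v, c u != c v, c u != c2 & c v != c2].
pose pr := fun v => c v == c0.
have esym : symmetric e.
  move=> u v; rewrite /e adj_sym // [c u == c v]eq_sym.
  by case: (c u != c2); case: (c v != c2); rewrite ?andbF ?andbT.
have ebip : forall x y, e x y -> pr x != pr y.
  move=> x y /and4P [_ hne hx hy]; rewrite /pr.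
  by case: (I3_cases (c x)) hne hx => ->; case: (I3_cases (c y)) hy => ->.
have hinS : forall v, v \in Sz E c z -> adj E v z /\ c v != c2.
  by move=> v; rewrite inE => /and3P [].
have hnp : forall x s, x \in Sz E c z -> all (mem (Sz E c z)) s -> uniq (x::s) ->
   path e x s -> (size s).+1 < 2 * k.
  move=> x s hx hsS hu hp; rewrite ltnNge; apply/negP => hlen.
  have hall : forall v, v \in x :: s -> adj E v z.
    move=> v; rewrite inE => /orP [/eqP -> | hv]; first exact: (hinS x hx).1.
    exact: (hinS v (allP hsS v hv)).1.
  have hzn : z \notin x :: s by apply/negP => /hall; rewrite adj_irr.
  move/negP: hf; apply.
  pose g i := if i < 2 * k then nth x (x :: s) i else z.
  have hk2 : 0 < 2 * k by lia.
  apply: (@cycle_of_fun _ _ _ g).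
  - move=> i j hi hj; rewrite /g; case: ltnP => hi'; case: ltnP => hj' //.
    + move/eqP; rewrite nth_uniq //; [by move/eqP | rewrite /=; lia | rewrite /=; lia].
    + move=> he; move: hzn; rewrite -he mem_nth //=; lia.
    + move=> he; move: hzn; rewrite he mem_nth //=; lia.
    + lia.
  - move=> i hi; rewrite /g (succ_mod hi).
    have : i.+1 < 2 * k \/ i.+1 = 2 * k \/ i = 2 * k by lia.
    case=> [h1 | [h1 | h1]].
    + have h1' : i.+1 < 2 * k + 1 by lia.
      have hi2 : i < 2 * k by lia.
      rewrite h1' hi2 h1.
      have hsi : i < size s by lia.
      by have := (pathP x hp) i hsi => /and4P [].
    + have h1' : i.+1 < 2 * k + 1 by lia.
      have hi2 : i < 2 * k by lia.
      rewrite h1' hi2 h1 ltnn; apply: hall; rewrite mem_nth //=; lia.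
    + have h1' : (i.+1 < 2 * k + 1) = false by lia.
      rewrite h1' h1 ltnn hk2 /= adj_sym //; exact: (hinS x hx).1.
have hb := edge_bound esym ebip hnp.
apply: leq_trans hb.
rewrite pair_big /= [X in _ <= X]big_mkcond /=; apply: leq_sum => p _.
case: p => x y /=; rewrite inE /=.
case: (boolP [&& c x == c0, c y == c1, c z == c2, adj E x y, adj E x z & adj E y z]) => //.
move=> /and5P [/eqP hx /eqP hy _ hxy /andP [hxz hyz]].
have hxS : x \in Sz E c z.
  rewrite inE hx hxz /=; apply/existsP; exists y; rewrite hy hyz hxy; by [].
have hyS : y \in Sz E c z.
  rewrite inE hy hyz /=; apply/existsP; exists x; rewrite hx hxz adj_sym //; by rewrite hxy.
by rewrite hxS hyS /e /pr hx hy hxy.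
Qed.


Lemma card_pairs (T : finType) (A : {set T * T}) :
  #|A| = \sum_z \sum_v ((v, z) \in A).
Proof.
rewrite exchange_big /= pair_bigA /=.
rewrite -sum1_card big_mkcond; apply: eq_bigr => [[x y]] _ /=; by case: (_ \in A).
Qed.

Lemma P_le_ex (T : finType) (E : {set T*T}) (c : T -> 'I_3) M (idx : T -> 'I_M) k (a b w : 'I_3)
  (hs : simple_graph E) (hf : cycle_free (2*k+1) E) (hk : 0 < k)
  (hab : a != b) (haw : a != w) (hbw : b != w)
  (hci : forall x y, c x = c y -> idx x = idx y -> x = y) :
  #|Pset E c a b w| <= ex_bip_cycle M M (2 * k).
Proof.
have -> : #|Pset E c a b w| = #|Bset E c idx a b w|.
  rewrite /Bset card_in_imset // => p q; rewrite !inE.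
  move=> /and4P [/eqP hp1 /eqP hp2 _ _] /and4P [/eqP hq1 /eqP hq2 _ _] [h1 h2].
  case: p q hp1 hp2 hq1 hq2 h1 h2 => x y [x' y'] /= hx hy hx' hy' h1 h2.
  by rewrite (hci x x') ?hx ?hx' // (hci y y') ?hy ?hy'.
rewrite /ex_bip_cycle; apply: leq_bigmax_cond.
exact: bip_free.
Qed.

Lemma rainbow_bound (T : finType) (E : {set T*T}) (c : T -> 'I_3) M (idx : T -> 'I_M) k
  (hs : simple_graph E) (hf : cycle_free (2*k+1) E) (hk : 0 < k)
  (hci : forall x y, c x = c y -> idx x = idx y -> x = y) :
  #|[set S in tri_set E | rainbow c S]| <= 2 * k.-1 * ex_bip_cycle M M (2 * k).
Proof.
apply: leq_trans (RT_le_Q E c) _.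
have hQ : #|Qset E c| = \sum_z \sum_p ((p, z) \in Qset E c).
  rewrite exchange_big /= pair_bigA /=.
  rewrite -sum1_card big_mkcond; apply: eq_bigr => [[x y]] _ /=; by case: (_ \in _).
rewrite hQ.
apply: (@leq_trans (\sum_z (c z == c2) * (k.-1 * #|Sz E c z|))).
  by apply: leq_sum => z _; apply: per_z.
have hS : \sum_z (c z == c2) * #|Sz E c z| <=
   #|Pset E c c0 c2 c1| + #|Pset E c c1 c2 c0|.
  rewrite !card_pairs -big_split /=; apply: leq_sum => z _.
  rewrite -big_split /=.
  have -> : (c z == c2) * #|Sz E c z| = \sum_v ((c z == c2) && (v \in Sz E c z)).
    rewrite -sum1_card big_distrr /= big_mkcond /=; apply: eq_bigr => v _.
    by case: (c z == c2); case: (v \in _).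
  apply: leq_sum => v _.
  case: (boolP (c z == c2)) => //= hz; case: (boolP (v \in Sz E c z)) => //= hv.
  move: hv; rewrite inE => /and3P [hv2 hvz /existsP [u /and4P [hu2 huv huz hvu]]].
  rewrite !inE /= hz hvz /=.
  case: (I3_cases (c v)) hv2 huv => hcv; rewrite hcv // => _ huv.
  - rewrite eqxx /=; apply: leq_trans (leq_addr _ _) ; rewrite lt0b.
    apply/existsP; exists u; rewrite hvu (adj_sym _ _ hs) huz andbT.
    by case: (I3_cases (c u)) hu2 huv => ->.
  - rewrite eqxx /=; apply: leq_trans (leq_addl _ _) ; rewrite lt0b.
    apply/existsP; exists u; rewrite hvu (adj_sym _ _ hs) huz andbT.
    by case: (I3_cases (c u)) hu2 huv => ->.
have hP1 := @P_le_ex T E c M idx k c0 c2 c1 hs hf hk isT isT isT hci.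
have hP2 := @P_le_ex T E c M idx k c1 c2 c0 hs hf hk isT isT isT hci.
under eq_bigr => z _ do rewrite mulnCA.
rewrite -big_distrr /=.
apply: leq_trans (leq_mul (leqnn k.-1) (leq_trans hS (leq_add hP1 hP2))) _.
by rewrite addnn -mul2n mulnCA mulnA.
Qed.


Lemma perm_onto_set (T : finType) (A B : {set T}) : #|A| = #|B| -> exists r : {perm T}, r @: A = B.
Proof.
move=> hAB.
have hC : #|~: A| = #|~: B|.
  have := cardsC A; have := cardsC B; lia.
pose f x := if x \in A then nth x (enum B) (index x (enum A))
            else nth x (enum (~: B)) (index x (enum (~: A))).
have hfA : forall x, x \in A -> f x \in B.
  move=> x hx; rewrite /f hx -mem_enum mem_nth // -cardE -hAB cardE index_mem mem_enum //.
have hfC : forall x, x \notin A -> f x \in ~: B.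
  move=> x hx; rewrite /f (negbTE hx) -mem_enum mem_nth // -cardE -hC cardE index_mem mem_enum.
  by rewrite inE.
have hfinj : injective f.
  move=> x y.
  case: (boolP (x \in A)) => hx; case: (boolP (y \in A)) => hy.
  - rewrite /f hx hy => e.
    have hix : index x (enum A) < size (enum B) by rewrite -cardE -hAB cardE index_mem mem_enum.
    have hiy : index y (enum A) < size (enum B) by rewrite -cardE -hAB cardE index_mem mem_enum.
    move: e; rewrite [nth y _ _](set_nth_default x) //.
    move/eqP; rewrite nth_uniq ?enum_uniq // => /eqP e.
    by rewrite -(nth_index x (x := x) (s := enum A)) ?mem_enum // e nth_index ?mem_enum.
  - move=> e; have := hfA x hx; have := hfC y hy; rewrite e inE => /negP; done.
  - move=> e; have := hfA y hy; have := hfC x hx; rewrite e inE => /negP; done.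
  - rewrite /f (negbTE hx) (negbTE hy) => e.
    have hx' : x \in ~: A by rewrite inE.
    have hy' : y \in ~: A by rewrite inE.
    have hix : index x (enum (~: A)) < size (enum (~: B)) by rewrite -cardE -hC cardE index_mem mem_enum.
    have hiy : index y (enum (~: A)) < size (enum (~: B)) by rewrite -cardE -hC cardE index_mem mem_enum.
    move: e; rewrite [nth y _ _](set_nth_default x) //.
    move/eqP; rewrite nth_uniq ?enum_uniq // => /eqP e.
    by rewrite -(nth_index x (x := x) (s := enum (~: A))) ?mem_enum // e nth_index ?mem_enum.
exists (perm hfinj); apply/eqP; rewrite eqEcard card_imset; last exact: perm_inj.
rewrite hAB leqnn andbT; apply/subsetP => y /imsetP [x hx ->]; rewrite permE; exact: hfA.
Qed.

Lemma rainbow_imset (T : finType) (c : T -> 'I_3) (f : {perm T}) (A : {set T}) :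
  rainbow (fun x => c (f x)) A = rainbow c (f @: A).
Proof.
apply/idP/idP.
- move=> h; apply/forallP => x'; apply/implyP => /imsetP [x hx ->].
  apply/forallP => y'; apply/implyP => /imsetP [y hy ->]; apply/implyP => hne.
  have hne' : x != y by apply: contra hne => /eqP ->.
  by move/forallP: h => /(_ x) /implyP /(_ hx) /forallP /(_ y) /implyP /(_ hy) /implyP /(_ hne').
- move=> h; apply/forallP => x; apply/implyP => hx; apply/forallP => y; apply/implyP => hy.
  apply/implyP => hne.
  have hne' : f x != f y by apply: contra hne => /eqP /perm_inj ->.
  move/forallP: h => /(_ (f x)) /implyP /(_ (imset_f _ hx)) /forallP /(_ (f y)) /implyP.
  by move=> /(_ (imset_f _ hy)) /implyP /(_ hne').
Qed.

Lemma arith N : 2 * 'C(N, 3) <= 9 * ((N + 2) %/ 3 * ((N + 1) %/ 3) * (N %/ 3)).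
Proof.
have h6 : 'C(N, 3) * 6 = N * (N.-1 * N.-2).
  by rewrite -[6]/(3`!) bin_ffact !ffactnS ffactn0 muln1.
move: h6; move: (binomial N 3) => C h6.
have [q [r [hr hN]]] : exists q r, r < 3 /\ N = 3 * q + r.
  by exists (N %/ 3), (N %% 3); split; [lia | lia].
subst N.
case: q h6 => [|p] h6.
  have : C = 0 by move: h6; case: r hr => [|[|[|]]] //=; lia.
  by move=> ->.
have : r = 0 \/ r = 1 \/ r = 2 by lia.
case=> [e | [e | e]]; subst r.
- have -> : (3 * p.+1 + 0 + 2) %/ 3 = p.+1 by lia.
  have -> : (3 * p.+1 + 0 + 1) %/ 3 = p.+1 by lia.
  have -> : (3 * p.+1 + 0) %/ 3 = p.+1 by lia.
  rewrite (_ : 3 * p.+1 + 0 = (3 * p + 1).+2) /= in h6; last by lia.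
  have -> : p.+1 = p + 1 by lia.
  nia.
- have -> : (3 * p.+1 + 1 + 2) %/ 3 = p + 2 by lia.
  have -> : (3 * p.+1 + 1 + 1) %/ 3 = p + 1 by lia.
  have -> : (3 * p.+1 + 1) %/ 3 = p + 1 by lia.
  rewrite (_ : 3 * p.+1 + 1 = (3 * p + 2).+2) /= in h6; last by lia.
  nia.
- have -> : (3 * p.+1 + 2 + 2) %/ 3 = p + 2 by lia.
  have -> : (3 * p.+1 + 2 + 1) %/ 3 = p + 2 by lia.
  have -> : (3 * p.+1 + 2) %/ 3 = p + 1 by lia.
  rewrite (_ : 3 * p.+1 + 2 = (3 * p + 3).+2) /= in h6; last by lia.
  nia.
Qed.


Definition col1 (N : nat) (x : 'I_N) : 'I_3 := Ordinal (ltn_pmod x (isT : 0 < 3)).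
Definition colp (N : nat) (s : {perm 'I_N}) (x : 'I_N) : 'I_3 := col1 (s x).

Lemma rainbow3 (T : finType) (c : T -> 'I_3) x y z :
  c x != c y -> c x != c z -> c y != c z -> rainbow c [set x; y; z].
Proof.
move=> hxy hxz hyz.
have hyx : c y != c x by rewrite eq_sym.
have hzx : c z != c x by rewrite eq_sym.
have hzy : c z != c y by rewrite eq_sym.
apply/forallP => u; apply/implyP; rewrite !inE => /orP [/orP [] | ] /eqP ->;
apply/forallP => v; apply/implyP; rewrite !inE => /orP [/orP [] | ] /eqP ->;
by rewrite ?eqxx ?hxy ?hxz ?hyz ?hyx ?hzx ?hzy ?implybT.
Qed.

Lemma card_res (n : nat) (r : nat) (hr : r < 3) :
  (n.+1 + 2 - r) %/ 3 <= #|[set x : 'I_n.+1 | col1 x == Ordinal hr]|.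
Proof.
pose q := (n.+1 + 2 - r) %/ 3.
have hb : forall i : 'I_q, 3 * i + r < n.+1.
  move=> i; have := ltn_ord i; rewrite /q; lia.
apply: leq_trans (_ : #|[set (inord (3 * i + r) : 'I_n.+1) | i : 'I_q]| <= _).
  rewrite card_imset ?card_ord // => i j /(congr1 (@nat_of_ord _)).
  rewrite !inordK ?hb // => e; apply: val_inj => /=; lia.
apply: subset_leq_card; apply/subsetP => x /imsetP [i _ ->].
rewrite inE; apply/eqP; apply: val_inj => /=; rewrite inordK ?hb //.
lia.
Qed.


Lemma RB_lower (n : nat) :
  2 * 'C(n.+1, 3) <= 9 * \sum_(U : {set 'I_n.+1}) ((#|U| == 3) && rainbow (@col1 _) U).
Proof.
apply: leq_trans (arith n.+1) _; rewrite leq_mul2l /=.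
rewrite -card_sumP.
pose A r (hr : r < 3) := [set x : 'I_n.+1 | col1 x == Ordinal hr].
have h0 := card_res n (isT : 0 < 3).
have h1 := card_res n (isT : 1 < 3).
have h2 := card_res n (isT : 2 < 3).
rewrite subn0 in h0.
apply: leq_trans (_ : #|setX (setX (A 0 isT) (A 1 isT)) (A 2 isT)| <= _).
  rewrite !cardsX; apply: leq_mul; [apply: leq_mul|] => //.
    by move: h1; rewrite (_ : n.+1 + 2 - 1 = n.+1 + 1) //; lia.
  by move: h2; rewrite (_ : n.+1 + 2 - 2 = n.+1) //; lia.
pose F (t : ('I_n.+1 * 'I_n.+1) * 'I_n.+1) := [set t.1.1; t.1.2; t.2].
have hmem : forall t, t \in setX (setX (A 0 isT) (A 1 isT)) (A 2 isT) ->
  [/\ col1 t.1.1 = c0, col1 t.1.2 = c1 & col1 t.2 = c2].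
  by case=> [[x y] z]; rewrite !inE /= => /andP [/andP [/eqP -> /eqP ->] /eqP ->].
have huniq : forall x y z u : 'I_n.+1, col1 x = c0 -> col1 y = c1 -> col1 z = c2 ->
    u \in [set x; y; z] -> col1 u = c0 -> u = x.
  move=> x y z u hx hy hz; rewrite !inE => /orP [/orP [] | ] /eqP -> //.
  - by rewrite hy.
  - by rewrite hz.
rewrite -(card_in_imset (f := F)); last first.
  move=> t t' ht ht'; have [hx hy hz] := hmem t ht; have [hx' hy' hz'] := hmem t' ht'.
  case: t t' ht ht' hx hy hz hx' hy' hz' => [[x y] z] [[x' y'] z'] /= _ _ hx hy hz hx' hy' hz' e.
  rewrite /F /= in e.
  have ex : x = x'.
    apply: (huniq x' y' z' x hx' hy' hz') => //; by rewrite -e !inE eqxx.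
  have ey : y = y'.
    have hu := huniq.
    have : y \in [set x'; y'; z'] by rewrite -e !inE eqxx orbT.
    rewrite !inE => /orP [/orP [] | ] /eqP hh.
    + by move: hy; rewrite hh hx'.
    + done.
    + by move: hy; rewrite hh hz'.
  have ez : z = z'.
    have : z \in [set x'; y'; z'] by rewrite -e !inE eqxx !orbT.
    rewrite !inE => /orP [/orP [] | ] /eqP hh.
    + by move: hz; rewrite hh hx'.
    + by move: hz; rewrite hh hy'.
    + done.
  by rewrite ex ey ez.
apply: subset_leq_card; apply/subsetP => U /imsetP [t ht ->].
have [hx hy hz] := hmem t ht.
have hxy : col1 t.1.1 != col1 t.1.2 by rewrite hx hy.
have hxz : col1 t.1.1 != col1 t.2 by rewrite hx hz.
have hyz : col1 t.1.2 != col1 t.2 by rewrite hy hz.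
rewrite inE rainbow3 // andbT.
have ne : forall a b : 'I_n.+1, col1 a != col1 b -> a != b.
  by move=> a b; apply: contra => /eqP ->.
have e3 : F t = t.1.1 |: (t.1.2 |: [set t.2]) by apply/setP => v; rewrite !inE orbA.
by rewrite e3 !cardsU1 cards1 !inE negb_or !ne.
Qed.


Lemma eq_rainbow (T : finType) (c c' : T -> 'I_3) S : c =1 c' -> rainbow c S = rainbow c' S.
Proof.
move=> h; rewrite /rainbow; apply: eq_forallb => x; congr (_ ==> _).
by apply: eq_forallb => y; rewrite !h.
Qed.

Definition Rs (n : nat) (E : {set 'I_n * 'I_n}) (s : {perm 'I_n}) :=
  #|[set S in tri_set E | rainbow (colp s) S]|.

Lemma averaging (n : nat) (E : {set 'I_n.+1 * 'I_n.+1}) :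
  exists s : {perm 'I_n.+1}, 2 * #|tri_set E| <= 9 * Rs E s.
Proof.
pose N (S : {set 'I_n.+1}) := \sum_(s : {perm 'I_n.+1}) rainbow (colp s) S.
have hNeq : forall S S' : {set 'I_n.+1}, #|S| = #|S'| -> N S' = N S.
  move=> S S' h; have [r hr] := perm_onto_set h.
  rewrite /N -hr.
  under eq_bigr => s _ do rewrite -rainbow_imset.
  rewrite [RHS](reindex_inj (mulgI r)) /=; apply: eq_bigr => s _.
  congr (nat_of_bool _); apply: eq_rainbow => x; by rewrite /colp permM.
pose RB := \sum_(U : {set 'I_n.+1}) ((#|U| == 3) && rainbow (@col1 _) U).
have hsum : \sum_(S : {set 'I_n.+1} | #|S| == 3) N S = #|{perm 'I_n.+1}| * RB.
  rewrite exchange_big /= -sum_nat_const; apply: eq_bigr => s _.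
  rewrite big_mkcond /=.
  rewrite /RB [RHS](reindex_inj (imset_inj (@perm_inj _ s))) /=.
  apply: eq_bigr => S _.
  rewrite card_imset; last exact: perm_inj.
  rewrite -rainbow_imset; by case: (#|S| == 3).
have hSR : \sum_s Rs E s = \sum_(S in tri_set E) N S.
  rewrite exchange_big /=; apply: eq_bigr => s _.
  rewrite /Rs card_sumP [RHS]big_mkcond /=; apply: eq_bigr => S _.
  by case: (S \in tri_set E).
case: (set_0Vmem (tri_set E)) => [-> | [S0 hS0]].
  by exists 1%g; rewrite cards0.
have h3 : #|S0| = 3 by move: hS0; rewrite inE => /andP [/eqP].
have hSR' : \sum_s Rs E s = #|tri_set E| * N S0.
  rewrite hSR -sum_nat_const; apply: eq_bigr => S hS; apply: hNeq.
  by move: hS; rewrite inE h3 => /andP [/eqP].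
have hcd : 'C(n.+1, 3) = #|[set A : {set 'I_n.+1} | #|A| == 3]| by rewrite card_draws card_ord.
have hC : \sum_(S : {set 'I_n.+1} | #|S| == 3) N S = 'C(n.+1, 3) * N S0.
  rewrite hcd -sum_nat_const.
  apply: eq_big => [S|S]; first by rewrite inE.
  by move=> /eqP hS; apply: hNeq; rewrite h3.
have hRB : 2 * 'C(n.+1, 3) <= 9 * RB := RB_lower n.
have hCpos : 0 < 'C(n.+1, 3).
  by rewrite hcd card_gt0; apply/set0Pn; exists S0; rewrite inE h3.
have hP : 0 < #|{perm 'I_n.+1}| by apply/card_gt0P; exists 1%g.
have ht : 0 < #|tri_set E| by apply/card_gt0P; exists S0.
suff : [exists s, 2 * #|tri_set E| <= 9 * Rs E s] by move/existsP.
case: (boolP [exists s, 2 * #|tri_set E| <= 9 * Rs E s]) => // hne; exfalso.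
have hall : forall s, ~~ (2 * #|tri_set E| <= 9 * Rs E s).
  by move=> s; apply/negP => h; move/negP: hne; apply; apply/existsP; exists s.
have hlt : 9 * \sum_s Rs E s <= #|{perm 'I_n.+1}| * (2 * #|tri_set E|).-1.
  rewrite big_distrr /= -sum_nat_const; apply: leq_sum => s _.
  have := hall s; rewrite -ltnNge => h; by rewrite -ltnS prednK // muln_gt0 ht.
rewrite hSR' in hlt; rewrite hC in hsum.
move: hlt hsum hRB hCpos hP ht.
move: (#|tri_set E|) (N S0) ('C(n.+1, 3)) (#|{perm 'I_n.+1}|) RB => t N0 C P R.
move=> hlt hsum hRB hCpos hP ht.
have e1 : 9 * (t * N0) * C <= P * (2 * t).-1 * C by rewrite leq_mul2r hlt orbT.
have e2 : 9 * (t * N0) * C = t * P * (9 * R).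
  transitivity (9 * t * (C * N0)); first ring.
  rewrite hsum; ring.
have e3 : t * P * (2 * C) <= t * P * (9 * R) by rewrite leq_mul2l hRB orbT.
have e4 : P * (2 * t).-1 * C < t * P * (2 * C).
  have -> : P * (2 * t).-1 * C = (P * C) * (2 * t).-1 by ring.
  have -> : t * P * (2 * C) = (P * C) * (2 * t) by ring.
  rewrite ltn_pmul2l ?muln_gt0 ?hP ?hCpos //; lia.
have := leq_ltn_trans (leq_trans e3 (eq_leq (esym e2))) (leq_ltn_trans e1 e4).
by rewrite ltnn.
Qed.


Theorem theorem1 (k n : nat) (hk : 2 <= k) (hn : 0 < n) :
  t_max (2 * k + 1) n <= 9 * (k - 1) * ex_bip_cycle ((n + 2) %/ 3) ((n + 2) %/ 3) (2 * k).
Proof.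
case: n hn => // n _.
rewrite /t_max; apply/bigmax_leqP => E /andP [hs hf].
rewrite trianglesE.
have [s hs2] := averaging E.
have hb : forall x : 'I_n.+1, s x %/ 3 < (n.+1 + 2) %/ 3.
  by move=> x; have := ltn_ord (s x); lia.
pose idx (x : 'I_n.+1) : 'I_((n.+1 + 2) %/ 3) := Ordinal (hb x).
have hci : forall x y, colp s x = colp s y -> idx x = idx y -> x = y.
  move=> x y /(congr1 (@nat_of_ord _)) /= h1 /(congr1 (@nat_of_ord _)) /= h2.
  apply: (@perm_inj _ s); apply: val_inj => /=.
  by rewrite (divn_eq (s x) 3) (divn_eq (s y) 3) h1 h2.
have hk0 : 0 < k by lia.
have hr := rainbow_bound hs hf hk0 hci.
rewrite -(leq_pmul2l (isT : 0 < 2)); apply: leq_trans hs2 _.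
apply: leq_trans (leq_mul (leqnn 9) hr) _.
rewrite subn1; apply: eq_leq; ring.
Qed.
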